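(* Let $p\ge1$ and $q\le k$ be reals such that $\frac kp+\frac{pq}2\le k$. For any set family $\mathcal S\subseteq2^{[k]}$ such that $|S|\ge\frac kp+\frac{pq}2$ for every $S\in\mathcal S$ and $|S\cap S'|\le q$ for any two distinct $S,S'\in\mathcal S$, it holds that $|\mathcal S|\le p$.
   Context: $[k]=\{1,\dots,k\}$ and $2^{[k]}$ is its power set. *)

(* Defs.v *)
(* [k] = {1..k} is modelled by the finite type 'I_k (k elements). *)
From HB Require Import structures.
From mathcomp Require Import all_boot all_order all_algebra.
Set Implicit Arguments. Unset Strict Implicit. Unset Printing Implicit Defensive.

(* Main.v *)
Require Import Defs.
From HB Require Import structures.
From mathcomp Require Import all_boot all_order all_algebra.
From mathcomp Require Import zify ring lra.
Import Order.TTheory GRing.Theory Num.Theory.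
Local Open Scope ring_scope.

Section Aux.
Variable R : realFieldType.

Lemma cardR k (A : {set 'I_k}) : #|A|%:R = \sum_x ((x \in A)%:R : R).
Proof.
rewrite -sum1_card natr_sum big_mkcond /=; apply: eq_bigr => x _.
by case: (x \in A).
Qed.

Lemma nat3 (n : nat) : 3 * (n%:R : R) - n%:R ^+ 2 <= 2.
Proof.
have h : (3 * n <= n ^ 2 + 2)%N by case: n => [|[|n]] //; nia.
have := h; rewrite -(ler_nat R) natrD natrM natrX => h'.
lra.
Qed.

Lemma counting k (G : {set {set 'I_k}}) :
  2 * (\sum_(S in G) (#|S|%:R : R)) -
  \sum_(S in G) \sum_(S' in G | S' != S) (#|S :&: S'|%:R : R) <= 2 * k%:R.
Proof.
set c := fun x : 'I_k => \sum_(S in G) ((x \in S)%:R : R).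
have hA : \sum_(S in G) (#|S|%:R : R) = \sum_x c x.
  under eq_bigr do rewrite cardR.
  by rewrite exchange_big.
have hAll : \sum_(S in G) \sum_(S' in G) (#|S :&: S'|%:R : R) = \sum_x c x ^+ 2.
  rewrite [RHS](eq_bigr (fun x => \sum_(S in G) \sum_(S' in G)
       ((x \in S)%:R * (x \in S')%:R : R))); last first.
    by move=> x _; rewrite expr2 big_distrlr.
  rewrite [RHS]exchange_big; apply: eq_bigr => S _.
  rewrite [RHS]exchange_big; apply: eq_bigr => S' _.
  rewrite cardR; apply: eq_bigr => x _; by rewrite in_setI -natrM mulnb.
have hD : \sum_(S in G) \sum_(S' in G) (#|S :&: S'|%:R : R) =
   \sum_(S in G) (#|S|%:R : R) +
   \sum_(S in G) \sum_(S' in G | S' != S) (#|S :&: S'|%:R : R).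
  rewrite -big_split /=; apply: eq_bigr => S SG.
  by rewrite (bigD1 S) //= setIid.
have -> : \sum_(S in G) \sum_(S' in G | S' != S) (#|S :&: S'|%:R : R)
   = \sum_x c x ^+ 2 - \sum_x c x by rewrite -hAll hD hA; ring.
rewrite hA.
have -> : 2 * \sum_x c x - (\sum_x c x ^+ 2 - \sum_x c x) =
   \sum_x (3 * c x - c x ^+ 2).
  rewrite [RHS]big_split /= -mulr_sumr sumrN; ring.
have -> : 2 * (k%:R : R) = \sum_(x : 'I_k) 2.
  by rewrite sumr_const card_ord mulr_natr.
apply: ler_sum => x _.
have -> : c x = (\sum_(S in G) (x \in S : nat))%:R by rewrite natr_sum.
exact: nat3.
Qed.

End Aux.

Theorem lemma3p8 (R : realFieldType) (k : nat) (p q : R)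
  (hp : 1 <= p) (hq : q <= k%:R)
  (hpk : k%:R / p + p * q / 2 <= k%:R)
  (F : {set {set 'I_k}})
  (hsize : forall S, S \in F -> k%:R / p + p * q / 2 <= #|S|%:R)
  (hinter : forall S S', S \in F -> S' \in F -> S != S' -> #|S :&: S'|%:R <= q) :
  #|F|%:R <= p.
Proof.
have p0 : 0 < p by apply: lt_le_trans hp.
case: (ltnP 1 #|F|) => [F2|F1]; last first.
  by move: F1; rewrite -(ler_nat R) => h; apply: le_trans h hp.
have [q0 k0] : 0 <= q /\ (0 < k)%N.
  move/card_gt1P: F2 => [S [S' [SF S'F SS']]].
  split.
    by apply: le_trans (hinter _ _ SF S'F SS').
  clear -SS'; case: k S S' SS' => // S S' SS'.
  move: SS'; suff -> : S = S' by rewrite eqxx.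
  by apply/setP => -[x hx].
set a := k%:R / p + p * q / 2.
suff key : forall n (G : {set {set 'I_k}}), G \subset F -> #|G| = n -> n%:R <= p.
  exact: key.
elim=> [|n IH] G GF cG; first exact: ltW p0.
have : (0 < #|G|)%N by rewrite cG.
move/card_gt0P => [S0 S0G].
have hn : n%:R <= p.
  apply: (IH (G :\ S0)).
    by apply: subset_trans GF; apply: subsetDl.
  by move: cG; rewrite (cardsD1 S0) S0G add1n => -[].
have hA : #|G|%:R * a <= \sum_(S in G) (#|S|%:R : R).
  have -> : #|G|%:R * a = \sum_(S in G) a by rewrite sumr_const mulr_natl.
  apply: ler_sum => S SG.
  apply: hsize; exact: (subsetP GF).
have hB : \sum_(S in G) \sum_(S' in G | S' != S) (#|S :&: S'|%:R : R)
    <= #|G|%:R * (#|G|%:R * q - q).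
  have -> : #|G|%:R * (#|G|%:R * q - q) = \sum_(S in G) (#|G|%:R * q - q)
    by rewrite sumr_const mulr_natl.
  apply: ler_sum => S SG.
  have -> : #|G|%:R * q - q = \sum_(S' in G | S' != S) q.
    have e := @sumr_const R _ (mem G) q; rewrite (bigD1 S) //= in e.
    rewrite mulr_natl -e; ring.
  apply: ler_sum => S' /andP [S'G nS].
  by apply: hinter; [exact: (subsetP GF) | exact: (subsetP GF) | rewrite eq_sym].
have hC := @counting R k G.
rewrite cG in hA hB.
move: hA hB hC; rewrite /a -natr1.
set T := n%:R; set K := k%:R => hA hB hC.
have K0 : 0 < K by rewrite ltr0n.
set x := K / p in hA *.
have hx : K = x * p by rewrite /x mulrVK // unitfE gt_eqF.
have x0 : 0 < x by rewrite /x divr_gt0.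
have h1 : 0 <= (T + 1) * q * (p - T) by rewrite mulr_ge0 ?subr_ge0 // mulr_ge0 // addr_ge0.
have h2 : (T + 1) * x <= x * p.
  have e : (T + 1) * (x + p * q / 2) * 2 - (T + 1) * ((T + 1) * q - q)
     = 2 * ((T + 1) * x) + (T + 1) * q * (p - T) by field.
  rewrite -hx; lra.
rewrite mulrC in h2.
by rewrite -(ler_pM2l x0).
Qed.
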